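(* Let $n\ge1$, $\delta>0$, and $\hat r\in\mathbb R^n$ with $\hat r_1>\hat r_2>\cdots>\hat r_n$. Let $t_i=\phi(\hat r_i)$, $i=1,\dots,n$, for some increasing function $\phi:\mathbb R\to\mathbb R$. Let $$\pi^{\mathrm{DRO}}(\delta)\in\arg\max_{\pi\in\Delta_n}\{\langle\pi,\hat r\rangle-\delta\|\pi\|_\infty\},\qquad \pi^{\mathrm{DRRO}}(\delta)\in\arg\max_{\pi\in\Delta_n}\{\langle\pi,\hat r\rangle-\max_i(\hat r_i-\delta\pi_i)\}.$$ Then $\sum_{i=1}^n\pi_i^{\mathrm{DRRO}}(\delta)\,t_i\ge\sum_{i=1}^n\pi_i^{\mathrm{DRO}}(\delta)\,t_i$. If $\phi$ is strictly increasing and the two optimizers differ, the inequality is strict.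
   Context: $\Delta_n$ is the probability simplex in $\mathbb R^n$; $\|\pi\|_\infty=\max_i|\pi_i|$. The first problem is the promptwise distributionally robust (worst-case value) problem under $\ell_1$ reward ambiguity of radius $\delta$; the second is equivalent to the promptwise worst-case regret problem under the same ambiguity. *)

(* Defs.v *)
From HB Require Import structures.
From mathcomp Require Import all_boot all_order all_algebra.
Set Implicit Arguments. Unset Strict Implicit. Unset Printing Implicit Defensive.
Import Order.TTheory GRing.Theory Num.Theory.
Local Open Scope ring_scope.

(* maximum of a (nonempty) list of reals; for [::] it returns 0 (never used) *)
Definition seqmax (R : realFieldType) (s : seq R) : R :=
  foldr Num.max (head 0 s) s.

Definition maxI (R : realFieldType) (n : nat) (f : 'I_n -> R) : R :=
  seqmax [seq f i | i <- enum 'I_n].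

Definition inSimplex (R : realFieldType) (n : nat) (p : 'I_n -> R) : Prop :=
  (forall i, 0 <= p i) /\ \sum_(i < n) p i = 1.

Definition inner (R : realFieldType) (n : nat) (p q : 'I_n -> R) : R :=
  \sum_(i < n) p i * q i.

Definition supnorm (R : realFieldType) (n : nat) (p : 'I_n -> R) : R :=
  maxI (fun i => `|p i|).

Definition isArgmaxSimplex (R : realFieldType) (n : nat)
  (F : ('I_n -> R) -> R) (p : 'I_n -> R) : Prop :=
  inSimplex p /\ forall q, inSimplex q -> F q <= F p.

Definition dro_obj (R : realFieldType) (n : nat) (delta : R) (r : 'I_n -> R)
  (p : 'I_n -> R) : R := inner p r - delta * supnorm p.

Definition drro_obj (R : realFieldType) (n : nat) (delta : R) (r : 'I_n -> R)
  (p : 'I_n -> R) : R := inner p r - maxI (fun i => r i - delta * p i).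

(* Main.v *)
Require Import Defs.
From HB Require Import structures.
From mathcomp Require Import all_boot all_order all_algebra.
From mathcomp Require Import ring lra.
From Stdlib Require Import FunctionalExtensionality.
Import Order.TTheory GRing.Theory Num.Theory.
Local Open Scope ring_scope.

Lemma seqmax_P (R : realFieldType) (P : R -> Prop) (s : seq R) :
  (0 < size s)%N -> (forall x, x \in s -> P x) ->
  (forall x y, P x -> P y -> P (Num.max x y)) -> P (seqmax s).
Proof.
move=> hs hin hmax.
have hh : P (head 0 s) by apply: hin; case: s hs => //= x s _; exact: mem_head.
rewrite /seqmax; move: (head 0 s) hh => h hh.
elim: s hin {hs} => [//|x s IH] hin /=.
apply: hmax; first by apply: hin; exact: mem_head.
by apply: IH => y hy; apply: hin; rewrite inE hy orbT.
Qed.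

Lemma seqmax_ub (R : realFieldType) (s : seq R) x : x \in s -> x <= seqmax s.
Proof.
rewrite /seqmax; move: (head 0 s) => h.
elim: s => [//|y s IH] /=; rewrite inE => /orP [/eqP ->|hx]; rewrite le_max ?lexx //.
by rewrite IH ?orbT.
Qed.

Lemma maxI_ub (R : realFieldType) n (f : 'I_n -> R) i : f i <= maxI f.
Proof. by apply: seqmax_ub; apply: map_f; rewrite mem_enum. Qed.

Lemma maxI_P (R : realFieldType) n (P : R -> Prop) (f : 'I_n.+1 -> R) :
  (forall i, P (f i)) -> (forall x y, P x -> P y -> P (Num.max x y)) -> P (maxI f).
Proof.
move=> hf hmax; apply: seqmax_P => //; first by rewrite size_map size_enum_ord.
by move=> x /mapP [i _ ->]; exact: hf.
Qed.

Lemma maxI_le (R : realFieldType) n (f : 'I_n.+1 -> R) c :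
  (forall i, f i <= c) -> maxI f <= c.
Proof.
move=> hf; apply: (@maxI_P _ _ (fun x => x <= c)) => // x y hx hy.
by rewrite ge_max hx hy.
Qed.

Lemma maxI_lt (R : realFieldType) n (f : 'I_n.+1 -> R) c :
  (forall i, f i < c) -> maxI f < c.
Proof.
move=> hf; apply: (@maxI_P _ _ (fun x => x < c)) => // x y hx hy.
by rewrite gt_max hx hy.
Qed.

Lemma sum_delta (R : realFieldType) n (F : 'I_n -> R) (j : 'I_n) :
  \sum_(i < n) F i * (i == j)%:R = F j.
Proof.
rewrite (bigD1 j) //= eqxx mulr1 big1 ?addr0 // => i /negbTE ->.
by rewrite mulr0.
Qed.

Definition Dg (R : realFieldType) n (r : 'I_n -> R) (j : 'I_n) : R :=
  \sum_(i < n) (if (i <= j)%N then r i - r j else 0).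
Arguments Dg {R n}.
Arguments maxI_ub {R n}.
Arguments maxI_le {R n}.
Arguments maxI_lt {R n}.
Arguments sum_delta {R n}.

Lemma dro_gap (R : realFieldType) n (delta : R) (r : 'I_n.+1 -> R) a j :
  0 < delta -> (forall i j : 'I_n.+1, (i < j)%N -> r j < r i) ->
  isArgmaxSimplex (dro_obj delta r) a -> a j < supnorm a -> delta <= Dg r j.
Proof.
move=> hdel hr [[a0 a1] opt] hj.
set m := supnorm a.
have am : forall i, a i <= m.
  move=> i; have h := maxI_ub (fun i => `|a i|) i; exact: (le_trans (ler_norm _) h).
have mpos : 0 < m by apply: le_lt_trans (a0 j) hj.
set g := maxI (fun i => if a i < m then a i else 0).
have gm : g < m by apply: maxI_lt => i; case: ifP.
have ag : forall i, a i < m -> a i <= g.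
  by move=> i hi; have := maxI_ub (fun i => if a i < m then a i else 0) i; rewrite /= hi.
have g0 : 0 <= g by apply: le_trans (a0 j) (ag j hj).
set e := fun i => ((a i == m)%:R : R).
have e01 : forall i, 0 <= e i /\ e i <= 1 by move=> i; rewrite /e; case: (a i == m).
set K := \sum_i e i.
have K0 : 0 <= K by apply: sumr_ge0 => i _; case: (e01 i).
have K1 : 0 < K + 1 by lra.
set eps := (m - g) / (K + 1).
have epsK : eps * (K + 1) = m - g by rewrite /eps divfK // lt0r_neq0.
have eps0 : 0 < eps by apply: divr_gt0 => //; lra.
have epsK' : eps * K + eps = m - g by rewrite -epsK mulrDr mulr1.
have epsKp : 0 <= eps * K by apply: mulr_ge0 => //; lra.
have ej : e j = 0 by rewrite /e (lt_eqF hj).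
set a' := fun i => a i - eps * e i + K * eps * (i == j)%:R.
have a'b : forall i, 0 <= a' i /\ a' i <= m - eps.
  move=> i; rewrite /a'; case: (eqVneq i j) => [->|nij].
    rewrite ej mulr1 mulr0 subr0; have := ag j hj; have := a0 j; lra.
  rewrite mulr0 addr0 /e; case: (eqVneq (a i) m) => [->|ham].
    rewrite mulr1; lra.
  have him : a i < m by rewrite lt_neqAle ham am.
  have := ag i him; have := a0 i; rewrite mulr0 subr0; lra.
have a'S : inSimplex a'.
  split; first by move=> i; case: (a'b i).
  rewrite /a' big_split /= sumrB (sum_delta (fun _ => K * eps)) -mulr_sumr a1.
  rewrite -/K; lra.
have inner' : inner a' r = inner a r - eps * (\sum_i e i * r i) + K * eps * r j.
  rewrite /inner (eq_bigr (fun i => a i * r i - eps * (e i * r i) + (K * eps * r i) * (i == j)%:R)); last first.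
    by move=> i _; rewrite /a'; ring.
  by rewrite big_split /= sumrB -mulr_sumr (sum_delta (fun i => K * eps * r i)).
have sup' : supnorm a' <= m - eps.
  rewrite /supnorm; apply: maxI_le => i; case: (a'b i) => h1 h2; by rewrite ger0_norm.
have hS : \sum_i e i * r i - K * r j <= Dg r j.
  rewrite /K mulr_suml -sumrB /Dg; apply: ler_sum => i _.
  case: (e01 i) => e0 e1.
  case: ifP => hij.
    have hrij : r j <= r i.
      move: hij; rewrite leq_eqVlt => /orP [/eqP/val_inj ->|/hr/ltW] //.
    nra.
  have hrij : r i < r j by apply: hr; rewrite ltnNge hij.
  nra.
have := opt a' a'S; rewrite /dro_obj inner' -/m => hopt.
have hd : delta * supnorm a' <= delta * (m - eps).
  by rewrite ler_pM2l.
have h1 : eps * (delta - (\sum_i e i * r i - K * r j)) <= 0 by lra.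
have : delta - (\sum_i e i * r i - K * r j) <= 0.
  by rewrite -(pmulr_rle0 _ eps0).
lra.
Qed.
Arguments dro_gap {R n delta r a j}.

Lemma drro_t (R : realFieldType) n (delta : R) (r : 'I_n.+1 -> R) b j :
  0 < delta -> (forall i j : 'I_n.+1, (i < j)%N -> r j < r i) ->
  isArgmaxSimplex (drro_obj delta r) b -> j != ord0 -> 0 < b j ->
  r j - delta * b j = maxI (fun i => r i - delta * b i).
Proof.
move=> hd hr [[b0 b1] opt] j0 bj.
set t := maxI _.
have ht : forall i, r i - delta * b i <= t.
  by move=> i; exact: (maxI_ub (fun i => r i - delta * b i)).
apply/le_anti; rewrite ht /= leNgt; apply/negP => hlt.
set gap := t - (r j - delta * b j).
have gap0 : 0 < gap by rewrite subr_gt0.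
set eps := Num.min (b j) (gap / delta).
have eps0 : 0 < eps by rewrite lt_min bj divr_gt0.
have epsb : eps <= b j by rewrite ge_min lexx.
have epsg : eps * delta <= gap.
  have : eps <= gap / delta by rewrite ge_min lexx orbT.
  by rewrite ler_pdivlMr.
have dep : 0 < delta * eps by rewrite mulr_gt0.
have j0' : (ord0 == j) = false by rewrite eq_sym (negbTE j0).
have rj : r j < r ord0 by apply: hr; rewrite lt0n.
set b' := fun i => b i - eps * (i == j)%:R + eps * (i == ord0)%:R.
have b'S : inSimplex b'.
  split.
    move=> i; rewrite /b'; case: (eqVneq i j) => [->|nij].
      rewrite (negbTE j0) mulr1 mulr0; lra.
    have : 0 <= eps * (i == ord0)%:R by rewrite mulr_ge0 ?ler0n // ltW.
    have := b0 i; rewrite mulr0; lra.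
  rewrite /b' big_split sumrB /= (sum_delta (fun _ => eps)) (sum_delta (fun _ => eps)) b1.
  lra.
have hmax : maxI (fun i => r i - delta * b' i) <= t.
  apply: maxI_le => i; rewrite /b'; case: (eqVneq i j) => [->|nij].
    rewrite (negbTE j0) mulr1 mulr0; rewrite /gap in epsg; lra.
  case: (eqVneq i ord0) => [->|ni0].
    rewrite mulr1 mulr0; have := ht ord0; lra.
  rewrite !mulr0 subr0 addr0; exact: ht.
have inner' : inner b' r = inner b r - eps * r j + eps * r ord0.
  rewrite /inner (eq_bigr (fun i => b i * r i - (eps * r i) * (i == j)%:R + (eps * r i) * (i == ord0)%:R)); last first.
    by move=> i _; rewrite /b'; ring.
  by rewrite big_split /= sumrB (sum_delta (fun i => eps * r i)) (sum_delta (fun i => eps * r i)).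
have := opt b' b'S; rewrite /drro_obj inner' -/t => hopt.
have : 0 < eps * (r ord0 - r j) by rewrite mulr_gt0 // subr_gt0.
lra.
Qed.

Arguments drro_t {R n delta r b j}.

Lemma drro_gap (R : realFieldType) n (delta : R) (r : 'I_n.+1 -> R) b j :
  0 < delta -> (forall i j : 'I_n.+1, (i < j)%N -> r j < r i) ->
  isArgmaxSimplex (drro_obj delta r) b -> 0 < b j -> Dg r j < delta.
Proof.
move=> hd hr hb bj; have [[b0 b1] _] := hb.
case: (eqVneq j ord0) => [->|j0].
  rewrite /Dg big1 // => i _; case: ifP => // hi.
  have -> : i = ord0 by apply/val_inj; move: hi; rewrite /= leqn0 => /eqP.
  by rewrite subrr.
have ht := drro_t hd hr hb j0 bj.
have hti : forall i, r i - delta * b i <= r j - delta * b j.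
  by move=> i; rewrite ht; exact: (maxI_ub (fun i => r i - delta * b i)).
have hdb : 0 < delta * b j by rewrite mulr_gt0.
have Es : \sum_(i < n.+1) delta * b i = delta by rewrite -mulr_sumr b1 mulr1.
rewrite /Dg -[X in _ < X]Es (bigD1 j) //= [X in _ < X](bigD1 j) //=.
apply: ltr_leD; first by rewrite leqnn subrr.
apply: ler_sum => i _; case: ifP => _.
  have := hti i; lra.
by rewrite mulr_ge0 // ltW.
Qed.

Lemma drro_mono (R : realFieldType) n (delta : R) (r : 'I_n.+1 -> R) b (i j : 'I_n.+1) :
  0 < delta -> (forall i j : 'I_n.+1, (i < j)%N -> r j < r i) ->
  isArgmaxSimplex (drro_obj delta r) b -> (i < j)%N -> 0 < b j -> b j < b i.
Proof.
move=> hd hr hb hij bj.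
have j0 : j != ord0 by apply/eqP => hj; move: hij; rewrite hj.
have ht := drro_t hd hr hb j0 bj.
have := maxI_ub (fun i => r i - delta * b i) i; rewrite -ht /= => hti.
have := hr _ _ hij => hrr.
have : delta * b j < delta * b i by lra.
by rewrite ltr_pM2l.
Qed.
Arguments drro_gap {R n delta r b j}.
Arguments drro_mono {R n delta r b i j}.

Lemma key_sum (R : realFieldType) n (c T : 'I_n -> R) :
  \sum_i c i = 0 -> (forall i j, c i < 0 -> 0 < c j -> T i <= T j) ->
  0 <= \sum_i c i * T i /\
  ((forall i j, c i < 0 -> 0 < c j -> T i < T j) -> (exists i, c i != 0) ->
   0 < \sum_i c i * T i).
Proof.
move=> cs hle.
case: (pickP (fun j => 0 < c j)) => [j0 cj0 | nopos]; last first.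
  have cz : forall i, c i = 0.
    move=> i; apply/eqP; rewrite -oppr_eq0; apply/eqP.
    apply: (@psumr_eq0P _ _ predT (fun i => - c i)) => //.
      by move=> k _; rewrite oppr_ge0 leNgt nopos.
    by rewrite sumrN cs oppr0.
  have -> : \sum_i c i * T i = 0 by apply: big1 => i _; rewrite cz mul0r.
  split => // _ [i]; by rewrite cz eqxx.
have [k ck kmin] : exists2 k, 0 < c k & forall j, 0 < c j -> T k <= T j.
  by case: (@arg_minP _ _ _ _ (fun j => 0 < c j) T cj0) => k ck kmin; exists k.
have E : \sum_i c i * T i = \sum_i c i * (T i - T k).
  under [RHS]eq_bigr do rewrite mulrBr.
  by rewrite sumrB -mulr_suml cs mul0r subr0.
have hterm : forall i, 0 <= c i * (T i - T k).
  move=> i; case: (ltgtP (c i) 0) => [neg|pos|->]; last by rewrite mul0r.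
    have := hle i k neg ck; nra.
  have := kmin i pos; nra.
split; first by rewrite E; apply: sumr_ge0 => i _.
move=> hlt [i ci].
case: (pickP (fun i => c i < 0)) => [i1 ci1|noneg].
  rewrite E (bigD1 i1) //=.
  have : 0 < c i1 * (T i1 - T k) by have := hlt i1 k ci1 ck; nra.
  have : 0 <= \sum_(j | j != i1) c j * (T j - T k) by apply: sumr_ge0 => j _.
  lra.
have cz : c i = 0.
  apply: (@psumr_eq0P _ _ predT c) => //.
  by move=> j _; rewrite leNgt noneg.
by move: ci; rewrite cz eqxx.
Qed.

Theorem mainTheorem12 (R : realFieldType) (n : nat) (delta : R)
  (r : 'I_n -> R) (phi : R -> R) (piDRO piDRRO : 'I_n -> R) :
  (0 < n)%N ->
  0 < delta ->
  (forall i j : 'I_n, (i < j)%N -> r j < r i) ->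
  {homo phi : x y / x <= y} ->
  isArgmaxSimplex (dro_obj delta r) piDRO ->
  isArgmaxSimplex (drro_obj delta r) piDRRO ->
  (\sum_(i < n) piDRO i * phi (r i) <= \sum_(i < n) piDRRO i * phi (r i)) /\
  ({homo phi : x y / x < y} -> piDRRO <> piDRO ->
   \sum_(i < n) piDRO i * phi (r i) < \sum_(i < n) piDRRO i * phi (r i)).
Proof.
case: n r piDRO piDRRO => [//|n] r a b _ hd hr hphi hA hB.
have [[a0 a1] _] := hA; have [[b0 b1] _] := hB.
set c := fun i => b i - a i.
have E : \sum_i b i * phi (r i) - \sum_i a i * phi (r i) = \sum_i c i * phi (r i).
  by rewrite -sumrB; apply: eq_bigr => i _; rewrite /c mulrBl.
have cs : \sum_i c i = 0 by rewrite /c sumrB a1 b1 subrr.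
have am : forall i, a i <= supnorm a.
  move=> i; have h := maxI_ub (fun i => `|a i|) i; exact: (le_trans (ler_norm _) h).
have key : forall i j, c i < 0 -> 0 < c j -> (j < i)%N.
  move=> i j ci cj.
  have bj : 0 < b j by have := a0 j; rewrite /c in cj; lra.
  have aj : a j = supnorm a.
    apply/le_anti; rewrite am /= leNgt; apply/negP => hlt.
    have := dro_gap hd hr hA hlt; have := drro_gap hd hr hB bj; lra.
  case: (ltngtP i j) => [hij|//|hij].
    have := drro_mono hd hr hB hij bj; have := am i; rewrite /c in ci cj; lra.
  by move: ci; rewrite (val_inj hij) => ci; rewrite /c in ci cj; lra.
have [k1 k2] := @key_sum _ _ c (fun i => phi (r i)) cs
  (fun i j ci cj => hphi _ _ (ltW (hr _ _ (key i j ci cj)))).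
split; first by rewrite -subr_ge0 E.
move=> hs hne; rewrite -subr_gt0 E; apply: k2.
  by move=> i j ci cj; apply: hs; apply: hr; exact: key.
case: (pickP (fun i => c i != 0)) => [i ci|allz]; first by exists i.
exfalso; apply: hne; apply: functional_extensionality => i.
by have := allz i; rewrite /c subr_eq0 => /negbFE/eqP.
Qed.
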